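(* Let $\mathcal{G}$ be a directed path on $N$ nodes with unit edge weights, whose nodes are labelled $1,\dots,N$ in the order in which they appear along the path starting from the root (so the edges are from $i+1$ to $i$ for $i=1,\dots,N-1$, with weight $1$). Then the entries of its matrix $X$ are $$x_{k,j}=\frac{2N^2+3N+1+3k^2+3j^2-3(N+1)k-3(N+1)j}{3N}-|k-j|,\qquad 1\le k,j\le N.$$
   Context: For a directed graph with nonnegative adjacency matrix $A=[a_{i,j}]$ ($a_{i,j}>0$ iff there is an edge from $i$ to $j$), let $D$ be the diagonal matrix of out-degrees $d_k=\sum_j a_{k,j}$ and $L=D-A$. Let $\Pi=I_N-\frac1N\mathbf{1}_N\mathbf{1}_N^T$, $Q\in\mathbb{R}^{(N-1)\times N}$ with $Q\mathbf{1}_N=0$, $QQ^T=I_{N-1}$, $Q^TQ=\Pi$; $\overline L=QLQ^T$; $\Sigma$ the unique solution of $\overline L\Sigma+\Sigma\overline L^T=I_{N-1}$; and $X=2Q^T\Sigma Q$ (independent of $Q$). The root of the path is its unique node of out-degree $0$. *)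

(* Defs.v *)
From HB Require Import structures.
From mathcomp Require Import all_boot all_order all_algebra.
Set Implicit Arguments. Unset Strict Implicit. Unset Printing Implicit Defensive.
Import Order.TTheory GRing.Theory Num.Theory.
Local Open Scope ring_scope.

Definition outdeg_mx (R : ringType) (N : nat) (A : 'M[R]_N) : 'M[R]_N :=
  diag_mx (\row_k (\sum_j A k j)).

Definition laplacian (R : ringType) (N : nat) (A : 'M[R]_N) : 'M[R]_N :=
  outdeg_mx A - A.

(* Adjacency matrix of the directed path with unit weights, nodes labelled
   1..N from the root (0-indexed here as 0..N-1): edges (i+1) -> i, weight 1,
   i.e. a_{i,j} = 1 iff i = j+1. *)
Definition path_adj (R : ringType) (N : nat) : 'M[R]_N :=
  \matrix_(i < N, j < N) (if (i : nat) == (j : nat).+1 then 1 else 0).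

Definition Pi_mx (R : fieldType) (N : nat) : 'M[R]_N :=
  1%:M - (N%:R)^-1 *: (const_mx 1 : 'M[R]_(N, 1)) *m (const_mx 1 : 'M[R]_(1, N)).

(* Main.v *)
Require Import Defs.
From HB Require Import structures.
From mathcomp Require Import all_boot all_order all_algebra.
From mathcomp Require Import ring lra zify.
Import Order.TTheory GRing.Theory Num.Theory.
Local Open Scope ring_scope.

Lemma sum_delta (R : nzRingType) (n i : nat) (F : nat -> R) :
  \sum_(m < n) (if i == (m : nat) then F m else 0) = if (i < n)%N then F i else 0.
Proof.
elim: n => [|n IH]; first by rewrite big_ord0.
rewrite big_ord_recr /= IH.
case: ifP => h1; case: ifP => /eqP h2; case: ifP => h3; rewrite ?addr0 ?add0r //; try lia.
by rewrite h2.
Qed.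

Definition lap (R : nzRingType) (i j : nat) : R :=
  (if i == j then (if (0 < i)%N then 1 else 0) else 0) - (if i == j.+1 then 1 else 0).

Lemma lapE (R : nzRingType) N (i j : 'I_N) : laplacian (path_adj R N) i j = lap R i j.
Proof.
rewrite /laplacian /outdeg_mx /path_adj !mxE.
under eq_bigr do rewrite mxE.
rewrite /lap; congr (_ - _).
have -> : (i == j) = ((i:nat) == j) by [].
case: ((i:nat) == j); rewrite ?mulr0n ?mulr1n //.
case: i => [[|i] hi] /=.
  by rewrite big1.
have -> : \sum_(j0 < N) (if i.+1 == (j0 : nat).+1 then 1 else 0) = \sum_(j0 < N) (if i == (j0:nat) then (1 : R) else 0).
  by apply: eq_bigr => m _; rewrite eqSS.
by rewrite (@sum_delta R N i (fun _ => 1)) ltnW.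
Qed.

Lemma sum_lap (R : nzRingType) n i (F : nat -> R) : (i < n)%N ->
  \sum_(m < n) lap R i m * F m = if (0 < i)%N then F i - F i.-1 else 0.
Proof.
move=> hi; rewrite /lap.
under eq_bigr do rewrite mulrBl.
rewrite sumrB.
have -> : \sum_(m<n) (if i == (m:nat) then (if (0<i)%N then 1 else 0) else 0) * F m
   = \sum_(m<n) (if i == (m:nat) then (if (0<i)%N then F m else 0) else 0).
  by apply: eq_bigr => m _; case: eqP => _; rewrite ?mul0r //; case: ifP => _; rewrite ?mul1r ?mul0r.
rewrite (@sum_delta R n i (fun m => if (0<i)%N then F m else 0)) hi.
case: i hi => [|i] hi /=.
  by rewrite big1 ?subr0 // => m _; rewrite mul0r.
have -> : \sum_(m<n) (if i.+1 == (m:nat).+1 then 1 else 0) * F m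
   = \sum_(m<n) (if i == (m:nat) then F m else 0).
  by apply: eq_bigr => m _; rewrite eqSS; case: eqP => _; rewrite ?mul1r ?mul0r.
by rewrite (@sum_delta R n i F) ltnW.
Qed.

Definition mpow (R : nzRingType) n (B : 'M[R]_n) (a : nat) := iter a (mulmx B) 1%:M.
Arguments mpow {R n}.

Lemma mpow_strict (R : nzRingType) n (B : 'M[R]_n) :
  (forall i j : 'I_n, (i <= j)%N -> B i j = 0) ->
  forall a (i j : 'I_n), (i < j + a)%N -> mpow B a i j = 0.
Proof.
move=> hB; elim=> [|a IH] i j hij.
  by rewrite /mpow /= mxE; move: hij; rewrite addn0 => /ltn_eqF; rewrite -val_eqE => ->.
rewrite /mpow /= mxE big1 // => m _.
case: (leqP i m) => h; first by rewrite hB // mul0r.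
rewrite IH ?mulr0 //; lia.
Qed.

Lemma mpow_comm (R : nzRingType) n (B : 'M[R]_n) a : mpow B a *m B = B *m mpow B a.
Proof.
elim: a => [|a IH]; first by rewrite /mpow /= mul1mx mulmx1.
by rewrite /mpow /= -mulmxA -/(mpow B a) IH.
Qed.
Definition yf (R : realFieldType) (N i j : nat) : R :=
  let kk : R := (i.+1)%:R in let jj : R := (j.+1)%:R in let NN : R := N%:R in
  (2%:R * NN ^+ 2 + 3%:R * NN + 1 + 3%:R * kk ^+ 2 + 3%:R * jj ^+ 2
             - 3%:R * (NN + 1) * kk - 3%:R * (NN + 1) * jj) / (3%:R * NN)
            - `|kk - jj|.

Definition gf (R : realFieldType) (N i : nat) : R := (2 * i%:R - N%:R) / N%:R.

Lemma absd (R : realDomainType) (i j : nat) :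
  `|i%:R - j%:R : R| = if (i <= j)%N then j%:R - i%:R else i%:R - j%:R.
Proof.
case: leqP => h.
  by rewrite distrC ger0_norm // subr_ge0 ler_nat.
by rewrite ger0_norm // subr_ge0 ler_nat ltnW.
Qed.

Lemma E1 (R : realFieldType) N i j : (i < N)%N -> (j < N)%N ->
  (if (0<i)%N then yf R N i j - yf R N i.-1 j else 0)
  + (if (0<j)%N then yf R N i j - yf R N i j.-1 else 0)
  = (2 : R) *+ (i == j) + gf R N i + gf R N j.
Proof.
move=> hi hj.
have N0 : (N%:R : R) != 0 by rewrite pnatr_eq0; lia.
rewrite /yf /gf !absd.

case: (ltngtP i j) => h.
- case: (eqVneq j i.+1) => [-> | ne].
    clear h hj; case: i hi => [|i] hi /=; repeat (case: ifP => /= ?); try (exfalso; lia); field; exact N0.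
  have [d ->] : exists d, j = (i + d.+2)%N by exists (j - i.+2)%N; lia.
  clear h ne hj; case: i hi => [|i] hi /=; repeat (case: ifP => /= ?); try (exfalso; lia); field; exact N0.
- case: (eqVneq i j.+1) => [-> | ne].
    clear h hi; case: j hj => [|j] hj /=; repeat (case: ifP => /= ?); try (exfalso; lia); field; exact N0.
  have [d ->] : exists d, i = (j + d.+2)%N by exists (i - j.+2)%N; lia.
  clear h ne hi; case: j hj => [|j] hj /=; repeat (case: ifP => /= ?); try (exfalso; lia); field; exact N0.
- subst j; rewrite ?eqxx.
  case: i hi hj => [|i] hi hj /=; repeat (case: ifP => /= ?); try (exfalso; lia); field; exact N0.
Qed.

Ltac fld := field; repeat split; try assumption; rewrite ?pnatr_eq0 //; try lia.

Lemma S1 (R : realFieldType) n : \sum_(j < n) ((j.+1)%:R : R) = n%:R * (n%:R + 1) / 2.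
Proof.
elim: n => [|n IH]; first by rewrite big_ord0 mul0r mul0r.
rewrite big_ord_recr /= IH; fld.
Qed.

Lemma S2 (R : realFieldType) n : \sum_(j < n) ((j.+1)%:R ^+ 2 : R) = n%:R * (n%:R + 1) * (2 * n%:R + 1) / 6.
Proof.
elim: n => [|n IH]; first by rewrite big_ord0 !mul0r.
rewrite big_ord_recr /= IH; fld.
Qed.

Lemma T1 (R : realFieldType) i m : (m <= i.+1)%N ->
  \sum_(j < m) `|(i.+1)%:R - (j.+1)%:R : R| = m%:R * i%:R - m%:R * (m%:R - 1) / 2.
Proof.
elim: m => [|m IH] hm; first by rewrite big_ord0 !mul0r subr0.
rewrite big_ord_recr /= IH; last by lia.
rewrite distrC absd ifT; last by lia.
fld.
Qed.

Lemma T2 (R : realFieldType) i d :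
  \sum_(j < i.+1 + d) `|(i.+1)%:R - (j.+1)%:R : R| = (i%:R * (i%:R + 1) + d%:R * (d%:R + 1)) / 2.
Proof.
elim: d => [|d IH].
  rewrite addn0 T1 //; fld.
rewrite addnS big_ord_recr /= IH.
rewrite absd ifT; last by lia.
fld.
Qed.

Lemma S3 (R : realFieldType) i n : (i < n)%N ->
  \sum_(j < n) `|(i.+1)%:R - (j.+1)%:R : R| =
    (i%:R * (i%:R + 1) + (n%:R - 1 - i%:R) * (n%:R - i%:R)) / 2.
Proof.
move=> h.
have [d ->] : exists d, n = (i.+1 + d)%N by exists (n - i.+1)%N; lia.
rewrite T2; fld.
Qed.

Lemma lin_sum (R : realFieldType) n (a b c : R) (G H E : nat -> R) :
  \sum_(j < n) (a + b * G j + c * H j - E j)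
  = a * n%:R + b * \sum_(j < n) G j + c * \sum_(j < n) H j - \sum_(j < n) E j.
Proof.
by rewrite sumrB !big_split /= sumr_const card_ord -!mulr_sumr mulr_natr.
Qed.

Lemma E2 (R : realFieldType) N i : (i < N)%N -> \sum_(j < N) yf R N i j = 0.
Proof.
move=> hi.
have N0 : (N%:R : R) != 0 by rewrite pnatr_eq0; lia.
set K : R := (i.+1)%:R.
set NN : R := N%:R.
have -> : \sum_(j < N) yf R N i j = \sum_(j < N)
   ((2 * NN ^+ 2 + 3 * NN + 1 + 3 * K ^+ 2 - 3 * (NN + 1) * K) / (3 * NN)
    + NN^-1 * ((j.+1)%:R ^+ 2) + (- (NN + 1) / NN) * (j.+1)%:R
    - `|K - (j.+1)%:R|).
  apply: eq_bigr => j _; rewrite /yf -/K -/NN; fld.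
rewrite sumrB !big_split /= sumr_const card_ord -!mulr_sumr mulr_natr.
rewrite /K /NN S1 S2 S3 //; fld.
Qed.

Lemma QQ (R : nzRingType) m n (Q : 'M[R]_(m, n)) (P : 'M[R]_n) (A B : 'M[R]_n) :
  Q^T *m Q = P ->
  (Q *m A *m Q^T) *m (Q *m B *m Q^T) = Q *m (A *m P *m B) *m Q^T.
Proof.
move=> h; rewrite -!mulmxA (mulmxA Q^T Q) h !mulmxA //.
Qed.

Lemma QQ2 (R : nzRingType) m n (Q : 'M[R]_(m, n)) (P : 'M[R]_n) (A : 'M[R]_n) :
  Q^T *m Q = P -> Q^T *m (Q *m A *m Q^T) *m Q = P *m A *m P.
Proof. by move=> h; rewrite !mulmxA h -mulmxA h. Qed.

Lemma QT (R : comNzRingType) m n (Q : 'M[R]_(m, n)) (A : 'M[R]_n) :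
  (Q *m A *m Q^T)^T = Q *m A^T *m Q^T.
Proof. by rewrite !trmx_mul trmxK mulmxA. Qed.

Lemma Ymx_props (R : realFieldType) N (hN : (0 < N)%N) :
  let Y : 'M[R]_N := \matrix_(a, b) yf R N a b in
  [/\ Y *m (const_mx 1 : 'M[R]_(N, 1)) = 0, (const_mx 1 : 'M[R]_(1, N)) *m Y = 0 &
      Y^T = Y].
Proof.
move=> Y.
have h1 : Y *m (const_mx 1 : 'M[R]_(N, 1)) = 0.
  apply/matrixP => a b; rewrite !mxE.
  under eq_bigr do rewrite !mxE mulr1.
  exact: E2.
have hs : Y^T = Y.
  apply/matrixP => a b; rewrite !mxE /yf distrC; congr (_ / _ - _); ring.
split => //.
by rewrite -[X in X *m _]trmx_const -hs -trmx_mul h1 trmx0.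
Qed.

Lemma L1 (R : realFieldType) N :
  laplacian (path_adj R N) *m (const_mx 1 : 'M[R]_(N, 1)) = 0.
Proof.
apply/matrixP => a b; rewrite !mxE.
under eq_bigr => m _ do rewrite lapE mxE.
rewrite (@sum_lap R N a (fun _ => 1)) //.
by case: ifP => _; rewrite ?subrr.
Qed.

Lemma LY (R : realFieldType) N :
  let L := laplacian (path_adj R N) in
  let Y : 'M[R]_N := \matrix_(a, b) yf R N a b in
  let G : 'cV[R]_N := \col_a gf R N a in
  L *m Y + Y *m L^T = (2 : R)%:M + G *m (const_mx 1 : 'M[R]_(1, N))
                       + (const_mx 1 : 'M[R]_(N, 1)) *m G^T.
Proof.
move=> L Y G.
apply/matrixP => a b; rewrite !mxE.
under eq_bigr => m _ do rewrite lapE mxE.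
under [X in _ + X = _]eq_bigr => m _ do rewrite mxE [L^T _ _]mxE lapE mulrC.
rewrite (@sum_lap R N a (fun m => yf R N m b)) //.
rewrite (@sum_lap R N b (fun m => yf R N a m)) //.
rewrite !big_ord1 !mxE mulr1 mul1r.
exact: E1.
Qed.

Lemma Bprops (R : realFieldType) N (hN : (0 < N)%N) :
  let e0 : 'M[R]_(1, N) := \row_j (if 0%N == (j : nat) then 1 else 0) in
  let B := laplacian (path_adj R N) + (const_mx 1 : 'M[R]_(N, 1)) *m e0 - 1%:M in
  B *m (const_mx 1 : 'M[R]_(N, 1)) = 0 /\ (forall a m : 'I_N, (a <= m)%N -> B a m = 0).
Proof.
move=> e0 B.
have BE : forall a m : 'I_N, B a m = lap R a m + (if 0%N == (m : nat) then 1 else 0)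
                                      - (if (a : nat) == m then 1 else 0).
  move=> a m; rewrite 2!mxE lapE !mxE big_ord1 !mxE mul1r.
  by rewrite (_ : (a == m) = ((a:nat) == m)) //; case: ((a:nat) == m).
split.
  apply/matrixP => a b; rewrite mxE [in RHS]mxE.
  under eq_bigr => m _ do rewrite BE mxE mulrBl mulrDl.
  rewrite sumrB big_split /= (@sum_lap R N a (fun _ => 1)) //.
  under eq_bigr do rewrite mulr1.
  under [X in _ - X]eq_bigr do rewrite mulr1.
  rewrite (@sum_delta R N 0 (fun _ => 1)) (@sum_delta R N a (fun _ => 1)) hN ltn_ord.
  by case: ifP => _; rewrite ?subrr ?add0r ?subrr.
move=> a m h; rewrite BE /lap.
case: (ltngtP a m) h => // h _; do ![case: ifP => /= ?]; try lia; lra.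
Qed.

Theorem lemma5 (R : realFieldType) (N : nat)
  (Q : 'M[R]_(N.-1, N)) (Sigma : 'M[R]_(N.-1))
  (hQ1 : Q *m (const_mx 1 : 'M[R]_(N, 1)) = 0)
  (hQQt : Q *m Q^T = 1%:M)
  (hQtQ : Q^T *m Q = Pi_mx R N)
  (hSigma : let Lbar := Q *m laplacian (path_adj R N) *m Q^T in
            Lbar *m Sigma + Sigma *m Lbar^T = 1%:M) :
  let X := 2%:R *: (Q^T *m Sigma *m Q) in
  forall k j : 'I_N,
    let kk : R := (k.+1)%:R in
    let jj : R := (j.+1)%:R in
    let NN : R := N%:R in
    X k j = (2%:R * NN ^+ 2 + 3%:R * NN + 1 + 3%:R * kk ^+ 2 + 3%:R * jj ^+ 2
             - 3%:R * (NN + 1) * kk - 3%:R * (NN + 1) * jj) / (3%:R * NN)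
            - `|kk - jj|.
Proof.
move=> X k j kk jj NN.
have hN : (0 < N)%N by move: (ltn_ord k); lia.
set L := laplacian (path_adj R N).
set Y : 'M[R]_N := \matrix_(a, b) yf R N a b.
set G : 'cV[R]_N := \col_a gf R N a.
set c1c : 'M[R]_(N, 1) := const_mx 1.
set c1r : 'M[R]_(1, N) := const_mx 1.
rewrite -/c1c in hQ1.
have hQr : c1r *m Q^T = 0.
  have e : c1r = c1c^T by rewrite /c1r /c1c trmx_const.
  by rewrite e -trmx_mul hQ1 trmx0.
have [hY1 hY2 hYs] := Ymx_props R N hN.
rewrite -/c1c -/c1r -/Y in hY1 hY2 hYs.
have PiE : Pi_mx R N = 1%:M - (N%:R)^-1 *: c1c *m c1r by [].
have PiY : Pi_mx R N *m Y = Y.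
  by rewrite PiE mulmxBl mul1mx -mulmxA hY2 mulmx0 subr0.
have YPi : Y *m Pi_mx R N = Y.
  by rewrite PiE mulmxBr mulmx1 mulmxA -scalemxAr hY1 scaler0 mul0mx subr0.
have hL1 : L *m c1c = 0 by exact: L1.
have LPi : L *m Pi_mx R N = L.
  by rewrite PiE mulmxBr mulmx1 mulmxA -scalemxAr hL1 scaler0 mul0mx subr0.
have PiLt : Pi_mx R N *m L^T = L^T.
  have PiT : (Pi_mx R N)^T = Pi_mx R N by rewrite -hQtQ trmx_mul trmxK.
  by rewrite -PiT -trmx_mul LPi.
set Lbar := Q *m L *m Q^T.
have hS : Lbar *m Sigma + Sigma *m Lbar^T = 1%:M := hSigma.
set Sigma0 := (2%:R : R)^-1 *: (Q *m Y *m Q^T).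
have two0 : (2%:R : R) != 0 by rewrite pnatr_eq0.
have hS0 : Lbar *m Sigma0 + Sigma0 *m Lbar^T = 1%:M.
  rewrite /Sigma0 /Lbar QT -scalemxAr -scalemxAl !(QQ _ _ _ _ _ _ _ hQtQ) LPi YPi.
  rewrite -scalerDr -mulmxDl -mulmxDr (LY R N) -/L -/Y -/G.
  rewrite !mulmxDr !mulmxDl -/c1c -/c1r.
  rewrite -!mulmxA hQr !mulmx0 [Q *m (c1c *m _)]mulmxA hQ1 mul0mx !addr0.
  by rewrite mul_scalar_mx -scalemxAr hQQt scalerA mulVf // scale1r.
set e0 : 'M[R]_(1, N) := \row_j (if 0%N == (j : nat) then 1 else 0).
set B := L + c1c *m e0 - 1%:M.
have [hB1 hBs] := Bprops R N hN.
rewrite -/e0 -/c1c -/L -/B in hB1 hBs.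
set M := Lbar - 1%:M.
have hMB : M = Q *m B *m Q^T.
  rewrite /M /B mulmxBr mulmxDr mulmx1 mulmxBl mulmxDl [Q *m (c1c *m e0)]mulmxA hQ1.
  by rewrite !mul0mx addr0 hQQt.
have BPi : B *m Pi_mx R N = B.
  by rewrite PiE mulmxBr mulmx1 mulmxA -scalemxAr hB1 scaler0 mul0mx subr0.
have mpowM : forall a, mpow M a = Q *m mpow B a *m Q^T.
  elim=> [|a IH]; first by rewrite /mpow /= mulmx1 hQQt.
  rewrite [mpow M a.+1]/mpow /= -/(mpow M a) IH hMB (QQ _ _ _ _ _ _ _ hQtQ) BPi //.
have hMz : forall a, (N <= a)%N -> mpow M a = 0.
  move=> a ha; rewrite mpowM (_ : mpow B a = 0) ?mulmx0 ?mul0mx //.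
  apply/matrixP => i i'; rewrite mxE; apply: (@mpow_strict R N B hBs).
  by move: (ltn_ord i); lia.
set D := Sigma - Sigma0.
have hD : Lbar *m D + D *m Lbar^T = 0.
  have : (Lbar *m Sigma + Sigma *m Lbar^T) - (Lbar *m Sigma0 + Sigma0 *m Lbar^T) = 0.
    by rewrite hS hS0 subrr.
  by rewrite /D mulmxBr mulmxBl -addrACA -opprD.
have hLM : Lbar = M + 1%:M by rewrite /M subrK.
have hD' : M *m D + D + (D *m M^T + D) = 0.
  have tD : (M + 1%:M)^T = M^T + (1%:M)^T by apply/matrixP => i i'; rewrite !mxE.
  by move: hD; rewrite hLM mulmxDl mul1mx tD trmx1 mulmxDr mulmx1.
have Dd : D = Sigma - Sigma0 by [].
clearbody D M.
pose Dab a b := mpow M a *m D *m (mpow M b)^T.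
have hrec : forall a b, Dab a.+1 b + Dab a b + (Dab a b.+1 + Dab a b) = 0.
  move=> a b.
  have := congr1 (fun Z => mpow M a *m Z *m (mpow M b)^T) hD'.
  rewrite /= mulmx0 mul0mx !mulmxDr !mulmxDl.
  have e1 : mpow M a *m (M *m D) *m (mpow M b)^T = Dab a.+1 b.
    by rewrite /Dab mulmxA mpow_comm.
  have e2 : mpow M a *m (D *m M^T) *m (mpow M b)^T = Dab a b.+1.
    by rewrite /Dab mulmxA -[in LHS]mulmxA -trmx_mul mpow_comm.
  by rewrite e1 e2.
have hz : forall d a b, (2 * N <= a + b + d)%N -> Dab a b = 0.
  elim=> [|d IH] a b h.
    case: (leqP N a) => ha; first by rewrite /Dab hMz // !mul0mx.
    have hb : (N <= b)%N by lia.
    by rewrite /Dab (hMz b hb) trmx0 mulmx0.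
  have h1 : Dab a.+1 b = 0 by apply: IH; lia.
  have h2 : Dab a b.+1 = 0 by apply: IH; lia.
  have := hrec a b; rewrite h1 h2 !add0r.
  set Z := Dab a b => h3.
  apply/matrixP => i i'; move/matrixP: h3 => /(_ i i').
  rewrite mxE !mxE => ?; lra.
have hD0 : D = 0.
  have := hz (2 * N)%N 0%N 0%N (leqnn _).
  by rewrite /Dab /mpow /= mul1mx trmx1 mulmx1.
have hSig : Sigma = Sigma0 by apply/subr0_eq; rewrite -Dd.
rewrite /X hSig /Sigma0 -scalemxAr -scalemxAl scalerA mulfV // scale1r.
by rewrite (QQ2 _ _ _ _ _ _ hQtQ) PiY YPi mxE.
Qed.
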